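(* Let $p$ be a prime and let $A=\mathbb{Z}/(p^{\alpha_1})\times\cdots\times\mathbb{Z}/(p^{\alpha_m})$ for integers $1\le\alpha_1\le\cdots\le\alpha_m$. Then for every automorphism $M\in\operatorname{Aut}(A)$ whose order is a power of $p$, there exists a group endomorphism $N$ of $A$ such that $(M-\operatorname{Id})^m=pN$.
   Context: Here $M-\operatorname{Id}$ is the endomorphism $a\mapsto M(a)-a$ of the abelian group $A$, powers denote composition, and $pN$ is the endomorphism $a\mapsto pN(a)$. *)

(* Defs.v *)
From HB Require Import structures.
From mathcomp Require Import all_boot all_order all_algebra.
Set Implicit Arguments. Unset Strict Implicit. Unset Printing Implicit Defensive.
Import GRing.Theory.
Local Open Scope ring_scope.

Definition prodZp (p m : nat) (alpha : 'I_m -> nat) : Type :=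
  forall i : 'I_m, 'Z_(p ^ alpha i).

Section Ops.
Variables (p m : nat) (alpha : 'I_m -> nat).
Local Notation A := (prodZp p alpha).

Definition addA (a b : A) : A := fun i => a i + b i.
Definition subA (a b : A) : A := fun i => a i - b i.
Definition natmulA (a : A) (n : nat) : A := fun i => a i *+ n.

Definition is_endo (f : A -> A) : Prop :=
  forall a b : A, f (addA a b) = addA (f a) (f b).

Definition is_auto (f : A -> A) : Prop := is_endo f /\ bijective f.

Definition order_p_power (f : A -> A) : Prop :=
  exists k : nat, forall a : A, iter (p ^ k)%N f a = a.
End Ops.
Arguments order_p_power p {m alpha} f.
Arguments is_endo {p m alpha} f.
Arguments is_auto {p m alpha} f.
Arguments addA {p m alpha} a b i.
Arguments subA {p m alpha} a b i.
Arguments natmulA {p m alpha} a n i.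

(* Main.v *)
Require Import Defs.
From mathcomp Require Import all_boot all_order all_algebra.
From Stdlib Require Import FunctionalExtensionality.
Set Implicit Arguments. Unset Strict Implicit. Unset Printing Implicit Defensive.
Local Notation addA := Defs.addA.
Import GRing.Theory.
Local Open Scope ring_scope.

Section Mx.
Variable F : fieldType.
Variable n : nat.
Implicit Type B : 'M[F]_n.+1.
Lemma subM (X Y : 'M[F]_n.+1) : ((X * Y)%R <= Y)%MS.
Proof. by rewrite -mulmxE; apply: submxMl. Qed.

Lemma rank_stable B j : \rank (B ^+ j.+1) = \rank (B ^+ j) ->
  forall t, \rank (B ^+ (j + t)) = \rank (B ^+ j).
Proof.
move=> h t; elim: t => [|t IH]; first by rewrite addn0.
have s1 : (B ^+ j.+1 <= B ^+ j)%MS by rewrite exprS; apply: subM.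
have e1 : (B ^+ j <= B ^+ j.+1)%MS.
  by rewrite -(mxrank_leqif_sup s1) h.
rewrite -h.
suff: forall u, \rank (B ^+ (j + u).+1) = \rank (B ^+ j.+1).
  by move=> H; rewrite addnS H.
elim=> [|u IHu]; first by rewrite addn0.
have a1 : (\rank (B ^+ (j + u.+1).+1) <= \rank (B ^+ (j + u).+1))%N.
  by apply: mxrankS; rewrite [in X in (X <= _)%MS]exprS addnS; apply: subM.
have a2 : (\rank (B ^+ (j + u).+1) <= \rank (B ^+ (j + u.+1).+1))%N.
  have : (B ^+ j *m B ^+ (u.+1) <= B ^+ j.+1 *m B ^+ (u.+1))%MS by exact: submxMr.
  rewrite !mulmxE -!exprD => /mxrankS.
  by rewrite addnS -addSn addSnnS.
by apply/eqP; rewrite -IHu eqn_leq a1 a2.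
Qed.

Lemma nilp_mx B N : B ^+ N = 0 -> B ^+ n.+1 = 0.
Proof.
move=> hN.
have inv : forall j, (j <= n.+1)%N -> \rank (B ^+ j) = 0%N \/ (\rank (B ^+ j) + j <= n.+1)%N.
  elim=> [|j IH] hj.
    by right; rewrite expr0 addn0 mxrank1.
  have le : (\rank (B ^+ j.+1) <= \rank (B ^+ j))%N by rewrite exprS; apply: mxrankS; apply: subM.
  have [eq|lt] := eqVneq (\rank (B ^+ j.+1)) (\rank (B ^+ j)).
    left; rewrite eq -(rank_stable eq N) exprD hN mulr0 mxrank0 //.
  case: (IH (ltnW hj)) => h.
    by left; move: le; rewrite h leqn0 => /eqP.
  right; have lt' : (\rank (B ^+ j.+1) < \rank (B ^+ j))%N by rewrite ltn_neqAle lt le.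
  by rewrite addnS; apply: leq_trans h; rewrite ltn_add2r.
apply/eqP; rewrite -mxrank_eq0; case: (inv n.+1 (leqnn _)) => [->//|].
move=> H; rewrite -leqn0 -(leq_add2r n.+1); exact: H.
Qed.

Lemma frob_mx (p : nat) B k : p \in [pchar 'M[F]_n.+1] ->
  B ^+ (p ^ k) = 1 -> (B - 1) ^+ (p ^ k) = 0.
Proof.
move=> hc h.
suff: (B - 1) ^+ (p ^ k) = B ^+ (p ^ k) - 1 by rewrite h subrr.
elim: k {h} => [|k IH]; first by rewrite !expn0 !expr1.
rewrite expnSr !exprM IH -!(pFrobenius_autE hc) pFrobenius_autB_comm ?pFrobenius_aut1 //.
exact: commr1.
Qed.
End Mx.

Section S.
Variables (p n : nat) (alpha : 'I_n.+1 -> nat).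
Hypothesis hp : prime p.
Hypothesis ha : forall i, (1 <= alpha i)%N.
Local Notation A := (prodZp p alpha).
Local Notation c i := (p ^ (alpha i).-1)%N.

Lemma p_gt1 : (1 < p)%N. Proof. exact: prime_gt1. Qed.
Lemma p_gt0 : (0 < p)%N. Proof. exact: prime_gt0. Qed.
Lemma c_gt0 i : (0 < c i)%N. Proof. by rewrite expn_gt0 p_gt0. Qed.
Lemma qE i : (p ^ alpha i)%N = (c i * p)%N.
Proof. by rewrite -expnSr prednK // ha. Qed.
Lemma q_gt1 i : (1 < p ^ alpha i)%N.
Proof. by rewrite qE; apply: leq_trans p_gt1 _; rewrite leq_pmull // c_gt0. Qed.
Lemma dvd_pq i : (p %| p ^ alpha i)%N.
Proof. by rewrite qE dvdn_mull. Qed.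

Lemma valZ i k : ((k%:R : 'Z_(p ^ alpha i)) : nat) = (k %% p ^ alpha i)%N.
Proof. exact: (@val_Zp_nat (p ^ alpha i) (q_gt1 i) k). Qed.
Lemma valF k : ((k%:R : 'F_p) : nat) = (k %% p)%N.
Proof. exact: val_Fp_nat. Qed.
Lemma natZ i (x : 'Z_(p ^ alpha i)) : (x : nat)%:R = x.
Proof. exact: natr_Zp. Qed.
Lemma natF (x : 'F_p) : (x : nat)%:R = x.
Proof. exact: natr_Zp. Qed.
Lemma ZeqP i (a b : nat) :
  (a %% p ^ alpha i = b %% p ^ alpha i)%N -> (a%:R : 'Z_(p ^ alpha i)) = b%:R.
Proof. by move=> h; apply: val_inj; rewrite /= !valZ. Qed.
Lemma FeqP (a b : nat) : (a %% p = b %% p)%N -> (a%:R : 'F_p) = b%:R.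
Proof. by move=> h; apply: val_inj; rewrite /= !valF. Qed.
Lemma valZD i (x y : 'Z_(p ^ alpha i)) : nat_of_ord (x + y) = ((x + y) %% p ^ alpha i)%N.
Proof. by have := valZ i (x + y); rewrite natrD !natZ. Qed.
Lemma valFD (x y : 'F_p) : nat_of_ord (x + y) = ((x + y) %% p)%N.
Proof. by have := valF (x + y); rewrite natrD !natF. Qed.
Lemma Zlt i (x : 'Z_(p ^ alpha i)) : ((x : nat) < p ^ alpha i)%N.
Proof. by rewrite -[X in (_ < X)%N](Zp_cast (q_gt1 i)). Qed.
Lemma Flt (x : 'F_p) : ((x : nat) < p)%N.
Proof. by rewrite -[X in (_ < X)%N](Fp_cast hp). Qed.

Definition zeroA : A := fun i => 0.
Definition eA (j : 'I_n.+1) : A := fun i => if i == j then 1 else 0.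
Definition sumAs (s : seq 'I_n.+1) (F : 'I_n.+1 -> A) : A :=
  fun i => \sum_(j <- s) F j i.
Definition sumA F := sumAs (index_enum _) F.

Lemma decomp (a : A) : a = sumA (fun j => natmulA (eA j) (a j)).
Proof.
apply: functional_extensionality_dep => i.
rewrite /sumA /sumAs /natmulA /eA (bigD1 i) //= eqxx big1 ?addr0 ?natZ //.
by move=> j /negbTE; rewrite eq_sym => ->; rewrite mul0rn.
Qed.

Section Endo.
Variable g : A -> A.
Hypothesis hg : is_endo g.

Lemma endo0 : g zeroA = zeroA.
Proof.
have h : addA zeroA zeroA = zeroA.
  by apply: functional_extensionality_dep => i; rewrite /addA addr0.
have := hg zeroA zeroA; rewrite h => e.
apply: functional_extensionality_dep => i.
have := congr1 (fun f => f i) e; rewrite /addA /= => e'.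
by have := congr1 (fun x => x - g zeroA i) e'; rewrite addrK subrr.
Qed.

Lemma endo_sums s F : g (sumAs s F) = sumAs s (fun j => g (F j)).
Proof.
elim: s => [|x s IH].
  have -> : sumAs [::] F = zeroA.
    by apply: functional_extensionality_dep => i; rewrite /sumAs big_nil.
  rewrite endo0; apply: functional_extensionality_dep => i.
  by rewrite /sumAs big_nil.
have E : forall G, sumAs (x :: s) G = addA (G x) (sumAs s G).
  by move=> G; apply: functional_extensionality_dep => i; rewrite /sumAs big_cons.
by rewrite !E hg IH.
Qed.

Lemma endo_sum F : g (sumA F) = sumA (fun j => g (F j)).
Proof. exact: endo_sums. Qed.

Lemma endo_mul x k : g (natmulA x k) = natmulA (g x) k.
Proof.
elim: k => [|k IH].
  have -> : natmulA x 0 = zeroA.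
    by apply: functional_extensionality_dep => i; rewrite /natmulA mulr0n.
  by rewrite endo0; apply: functional_extensionality_dep => i; rewrite /natmulA mulr0n.
have E : forall y : A, natmulA y k.+1 = addA y (natmulA y k).
  by move=> y; apply: functional_extensionality_dep => i; rewrite /natmulA mulrS.
by rewrite !E hg IH.
Qed.
End Endo.

Lemma endo_sub (g : A -> A) : is_endo g -> is_endo (fun b => subA (g b) b).
Proof.
rewrite /is_endo => hg a b /=; rewrite hg.
apply: functional_extensionality_dep => i.
by rewrite /subA /addA opprD addrACA.
Qed.

Lemma endo_iter (g : A -> A) k : is_endo g -> is_endo (iter k g).
Proof. by move=> hg; elim: k => [|k IH] a b //=; rewrite IH hg. Qed.
Definition phi (a : A) : 'rV['F_p]_n.+1 := \row_i (((a i : nat))%:R : 'F_p).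

Lemma phiD a b : phi (addA a b) = phi a + phi b.
Proof.
apply/rowP => i; rewrite !mxE /addA valZD -natrD.
by apply: FeqP; rewrite modn_dvdm // dvd_pq.
Qed.

Lemma phi0 : phi zeroA = 0.
Proof. by apply/rowP => i; rewrite !mxE. Qed.

Lemma phiB a b : phi (subA a b) = phi a - phi b.
Proof.
have : addA (subA a b) b = a.
  by apply: functional_extensionality_dep => i; rewrite /addA /subA subrK.
move=> /(congr1 phi); rewrite phiD => <-; by rewrite addrK.
Qed.

Lemma phi_sums s F : phi (sumAs s F) = \sum_(j <- s) phi (F j).
Proof.
elim: s => [|x s IH].
  have -> : sumAs [::] F = zeroA.
    by apply: functional_extensionality_dep => i; rewrite /sumAs big_nil.
  by rewrite phi0 big_nil.
have -> : sumAs (x :: s) F = addA (F x) (sumAs s F).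
  by apply: functional_extensionality_dep => i; rewrite /sumAs big_cons.
by rewrite phiD IH big_cons.
Qed.

Lemma phiMn x k : phi (natmulA x k) = phi x *+ k.
Proof.
elim: k => [|k IH].
  have -> : natmulA x 0 = zeroA.
    by apply: functional_extensionality_dep => i; rewrite /natmulA mulr0n.
  by rewrite phi0 mulr0n.
have -> : natmulA x k.+1 = addA x (natmulA x k).
  by apply: functional_extensionality_dep => i; rewrite /natmulA mulrS.
by rewrite phiD IH mulrS.
Qed.

Definition repr1 (g : A -> A) (G : 'M['F_p]_n.+1) := forall a, phi (g a) = phi a *m G.

Lemma repr1_endo g : is_endo g -> repr1 g (\matrix_j phi (g (eA j))).
Proof.
move=> hg a.
rewrite {1}(decomp a) endo_sum // phi_sums mulmx_sum_row.
apply: eq_bigr => j _; rewrite rowK endo_mul // phiMn.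
by rewrite mxE -scaler_nat.
Qed.

Lemma repr1_iter g G k : repr1 g G -> repr1 (iter k g) (G ^+ k).
Proof.
move=> h; elim: k => [|k IH] a /=; first by rewrite expr0 mulmx1.
by rewrite h IH exprSr -mulmxE mulmxA.
Qed.

Lemma phi_surj v : exists a, phi a = v.
Proof.
exists (fun i => ((v 0 i : nat)%:R)); apply/rowP => i; rewrite mxE valZ.
rewrite -[RHS]natF; apply: FeqP; by rewrite modn_dvdm // dvd_pq.
Qed.

Lemma repr1_id_mx (X : 'M['F_p]_n.+1) : (forall a, phi a *m X = phi a) -> X = 1.
Proof.
move=> h; have h' : forall v : 'rV['F_p]_n.+1, v *m X = v.
  by move=> v; have [a <-] := phi_surj v; exact: h.
apply/row_matrixP => i; by rewrite -[X]mul1mx row_mul h'.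
Qed.
Definition iota (v : 'rV['F_p]_n.+1) : A := fun i => (((v 0 i : nat) * c i)%:R).
Definition kappa (a : A) : 'rV['F_p]_n.+1 := \row_i ((((a i : nat) %/ c i)%N)%:R).

Lemma iotaD v w : iota (v + w) = addA (iota v) (iota w).
Proof.
apply: functional_extensionality_dep => i; rewrite /iota /addA mxE valFD -natrD -mulnDl.
by apply: ZeqP; rewrite qE [(c i * p)%N]mulnC -!muln_modl modn_mod.
Qed.

Lemma iota0 : iota 0 = zeroA.
Proof. by apply: functional_extensionality_dep => i; rewrite /iota mxE. Qed.

Lemma iotaB v w : iota (v - w) = subA (iota v) (iota w).
Proof.
apply: functional_extensionality_dep => i.
have := congr1 (fun f => f i) (iotaD (v - w) w); rewrite subrK /addA /subA => ->.
by rewrite addrK.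
Qed.

Lemma iota_sum s (F : 'I_n.+1 -> 'rV['F_p]_n.+1) :
  iota (\sum_(j <- s) F j) = sumAs s (fun j => iota (F j)).
Proof.
elim: s => [|x s IH].
  rewrite big_nil iota0; apply: functional_extensionality_dep => i.
  by rewrite /sumAs big_nil.
rewrite big_cons iotaD IH; apply: functional_extensionality_dep => i.
by rewrite /sumAs big_cons.
Qed.

Lemma iotaMn v k : iota (v *+ k) = natmulA (iota v) k.
Proof.
elim: k => [|k IH].
  rewrite mulr0n iota0; apply: functional_extensionality_dep => i.
  by rewrite /natmulA mulr0n.
rewrite mulrS iotaD IH; apply: functional_extensionality_dep => i.
by rewrite /natmulA mulrS.
Qed.

Lemma kappa_iota v : kappa (iota v) = v.
Proof.
apply/rowP => i; rewrite mxE /iota valZ qE modn_small; last first.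
  by rewrite mulnC ltn_pmul2l ?c_gt0 ?Flt.
by rewrite mulnK ?c_gt0 // natF.
Qed.

Definition socle (a : A) := natmulA a p = zeroA.

Lemma iota_kappa a : socle a -> iota (kappa a) = a.
Proof.
move=> h; apply: functional_extensionality_dep => i.
have hi := congr1 (fun f => f i) h; rewrite /natmulA /zeroA /= in hi.
rewrite -[a i]natZ -(mulr_natr _ p) -natrM in hi; move: hi => /(congr1 val); rewrite /= valZ ?mod0n.
move/eqP; rewrite -/(dvdn _ _) [X in (X %| _)%N]qE dvdn_pmul2r ?p_gt0 // => hd.
rewrite /iota /kappa mxE valF modn_small ?divnK ?natZ //.
by rewrite ltn_divLR ?c_gt0 // mulnC -qE Zlt.
Qed.

Lemma socle_iota v : socle (iota v).
Proof.
apply: functional_extensionality_dep => i; rewrite /natmulA /iota /zeroA.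
by rewrite -(mulr_natr _ p) -natrM; apply: (ZeqP (b:=0%N)); rewrite qE -mulnA ?modnMl ?modnMr ?mod0n.
Qed.

Lemma socle_endo g a : is_endo g -> socle a -> socle (g a).
Proof. by move=> hg h; rewrite /socle -endo_mul // h endo0. Qed.

Definition repr2 (g : A -> A) (G : 'M['F_p]_n.+1) := forall v, g (iota v) = iota (v *m G).

Lemma iota_decomp v : iota v = sumA (fun j => natmulA (iota (delta_mx 0 j)) (v 0 j)).
Proof.
rewrite {1}(row_sum_delta v) iota_sum; congr sumAs; apply: functional_extensionality => j.
by rewrite -[v 0 j]natF scaler_nat iotaMn natF.
Qed.

Lemma repr2_endo g : is_endo g -> repr2 g (\matrix_j kappa (g (iota (delta_mx 0 j)))).
Proof.
move=> hg v; rewrite iota_decomp endo_sum // mulmx_sum_row iota_sum.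
congr sumAs; apply: functional_extensionality => j.
rewrite rowK endo_mul // -[v 0 j]natF scaler_nat iotaMn natF iota_kappa //.
by apply: socle_endo => //; exact: socle_iota.
Qed.

Lemma repr2_iter g G k : repr2 g G -> repr2 (iter k g) (G ^+ k).
Proof.
move=> h; elim: k => [|k IH] v /=; first by rewrite expr0 mulmx1.
by rewrite IH h exprSr -mulmxE mulmxA.
Qed.

Lemma repr2_id_mx (X : 'M['F_p]_n.+1) : (forall v, iota (v *m X) = iota v) -> X = 1.
Proof.
move=> h; have h' : forall v : 'rV['F_p]_n.+1, v *m X = v.
  by move=> v; rewrite -[LHS]kappa_iota h kappa_iota.
apply/row_matrixP => i; by rewrite -[X]mul1mx row_mul h'.
Qed.
Lemma mulrn_mod (V : zmodType) (x : V) q k : x *+ q = 0 -> x *+ (k %% q) = x *+ k.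
Proof. by move=> h; rewrite {2}(divn_eq k q) mulrnDr mulnC mulrnA h mul0rn add0r. Qed.

Lemma main_sec (M : A -> A) (hM : is_endo M) (k : nat)
  (hk : forall a, iter (p ^ k) M a = a) :
  exists N : A -> A, is_endo N /\
    forall a, iter n.+1 (fun b => subA (M b) b) a = natmulA (N a) p.
Proof.
pose g := fun b : A => subA (M b) b.
have hg : is_endo g := endo_sub hM.
pose f := iter n.+1 g.
have hf : is_endo f := endo_iter n.+1 hg.
have hc : p \in [pchar 'M['F_p]_n.+1] by rewrite pchar_lalg pchar_Fp.
have D1 : forall a i, (p %| (f a i : nat))%N.
  pose G1 := \matrix_j phi (M (eA j)).
  have r1 : repr1 M G1 := repr1_endo hM.
  have X1 : G1 ^+ (p ^ k) = 1.
    by apply: repr1_id_mx => a; rewrite -(repr1_iter (p ^ k) r1) hk.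
  have z2 := nilp_mx (frob_mx hc X1).
  have rg : repr1 g (G1 - 1).
    by move=> a; rewrite /g phiB r1 mulmxBr mulmx1.
  move=> a i; have := congr1 (fun v : 'rV['F_p]_n.+1 => v 0 i) (@repr1_iter g (G1 - 1) n.+1 rg a).
  rewrite -/f z2 mulmx0 !mxE => /(congr1 val); rewrite /= valF => /eqP.
  by rewrite -/(dvdn _ _).
have D2 : forall v, f (iota v) = zeroA.
  pose G2 := \matrix_j kappa (M (iota (delta_mx 0 j))).
  have r2 : repr2 M G2 := repr2_endo hM.
  have X2 : G2 ^+ (p ^ k) = 1.
    by apply: repr2_id_mx => v; rewrite -(repr2_iter (p ^ k) r2) hk.
  have z2 := nilp_mx (frob_mx hc X2).
  have rg : repr2 g (G2 - 1).
    by move=> v; rewrite /g r2 -iotaB mulmxBr mulmx1.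
  by move=> v; rewrite /f (@repr2_iter g (G2 - 1) n.+1 rg) z2 mulmx0 iota0.
pose y j : A := fun i => ((((f (eA j) i : nat) %/ p)%N)%:R).
have Hy1 : forall j, natmulA (y j) p = f (eA j).
  move=> j; apply: functional_extensionality_dep => i.
  by rewrite /natmulA /y -(mulr_natr _ p) -natrM divnK ?D1 // natZ.
have Hy2 : forall j, natmulA (y j) (p ^ alpha j) = zeroA.
  move=> j.
  have -> : natmulA (y j) (p ^ alpha j) = natmulA (natmulA (y j) p) (c j).
    apply: functional_extensionality_dep => i.
    by rewrite /natmulA (qE j) mulnC mulrnA.
  rewrite Hy1 -endo_mul //.
  have -> : natmulA (eA j) (c j) = iota (delta_mx 0 j).
    apply: functional_extensionality_dep => i; rewrite /natmulA /eA /iota mxE.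
    case: (eqVneq i j) => [->|ne].
      by rewrite !eqxx /= (Fp_cast hp) modn_small ?p_gt1 // mul1n.
    by rewrite andbF mulr0n mul0rn.
  exact: D2.
exists (fun a => sumA (fun j => natmulA (y j) (a j))); split.
  move=> a b; apply: functional_extensionality_dep => i.
  rewrite /sumA /sumAs /addA /natmulA -big_split; apply: eq_bigr => j _ /=.
  have h := congr1 (fun h => h i) (Hy2 j).
  rewrite /natmulA /zeroA /= -(Zp_cast (q_gt1 j)) in h.
  by rewrite mulrn_mod ?mulrnDr.
move=> a; rewrite -/g -/f; apply: functional_extensionality_dep => i.
rewrite {1}(decomp a) endo_sum // /sumA /sumAs /natmulA -sumrMnl.
apply: eq_bigr => j _; rewrite endo_mul // -Hy1 /natmulA.
by rewrite mulrnAC.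
Qed.
End S.

Theorem lemma2p7 (p m : nat) (alpha : 'I_m -> nat)
  (hp : prime p)
  (halpha1 : forall i : 'I_m, (1 <= alpha i)%N)
  (halpha_mono : forall i j : 'I_m, (i <= j)%N -> (alpha i <= alpha j)%N)
  (M : prodZp p alpha -> prodZp p alpha)
  (hM : is_auto M) (hMp : order_p_power p M) :
  exists N : prodZp p alpha -> prodZp p alpha,
    is_endo N /\
    forall a : prodZp p alpha,
      iter m (fun b => subA (M b) b) a = natmulA (N a) p.
Proof.
case: m alpha halpha1 halpha_mono M hM hMp => [|n] alpha ha _ M [hM _] [k hk].
  exists id; split; first by [].
  by move=> a; apply: functional_extensionality_dep => -[].
exact: (@main_sec p n alpha hp ha M hM k hk).
Qed.
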